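(* Let $\Bbbk$ be a field of characteristic $0$, $n\ge2$, and let $(A,\mu,\alpha)$ be a multiplicative $n$-ary totally Hom-associative algebra over $\Bbbk$, with $\mu(a_1,\ldots,a_n)=(a_1\cdots a_n)$. Define a $(2n-1)$-linear product by $(a_1,\ldots,a_{2n-1})^{(1)}=\big((a_1\cdots a_n),\alpha(a_{n+1}),\ldots,\alpha(a_{2n-1})\big)$ (the outer bracket being $\mu$). Then $A^1=(A,(\cdot)^{(1)},\alpha^2)$, with all $2n-2$ twisting maps equal to $\alpha^2$, is a multiplicative $(2n-1)$-ary totally Hom-associative algebra.
   Context: An $m$-ary Hom-algebra $(V,\mu,(\alpha_1,\ldots,\alpha_{m-1}))$ is a vector space $V$ with an $m$-linear map $\mu$ (written $\mu(a_1,\ldots,a_m)=(a_1\cdots a_m)$) and linear maps $\alpha_i\colon V\to V$. It is multiplicative if all $\alpha_i$ equal one map $\alpha$ and $\alpha\circ\mu=\mu\circ\alpha^{\otimes m}$. It is $m$-ary totally Hom-associative if for every $i\in\{1,\ldots,m-1\}$ and all $a_1,\ldots,a_{2m-1}$: $(\alpha_1(a_1),\ldots,\alpha_{i-1}(a_{i-1}),(a_i\cdots a_{i+m-1}),\alpha_i(a_{i+m}),\ldots,\alpha_{m-1}(a_{2m-1}))=(\alpha_1(a_1),\ldots,\alpha_i(a_i),(a_{i+1}\cdots a_{i+m}),\alpha_{i+1}(a_{i+m+1}),\ldots,\alpha_{m-1}(a_{2m-1}))$. *)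

(* Defs.v *)
From HB Require Import structures.
From mathcomp Require Import all_boot all_order all_algebra.
Set Implicit Arguments. Unset Strict Implicit. Unset Printing Implicit Defensive.
Import Order.TTheory GRing.Theory.
Local Open Scope ring_scope.

Section NaryHom.
Variables (K : fieldType) (V : lmodType K).

Definition upd (m : nat) (a : 'I_m -> V) (i : 'I_m) (x : V) : 'I_m -> V :=
  fun j => if j == i then x else a j.

Definition multilinear (m : nat) (mu : ('I_m -> V) -> V) : Prop :=
  forall (i : 'I_m) (a : 'I_m -> V) (c : K) (x y : V),
    mu (upd a i (c *: x + y)) = c *: mu (upd a i x) + mu (upd a i y).

Definition linear_map (f : V -> V) : Prop :=
  forall (c : K) (x y : V), f (c *: x + y) = c *: f x + f y.

Definition multiplicative (m : nat) (mu : ('I_m -> V) -> V) (alpha : V -> V) : Prop :=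
  forall a : 'I_m -> V, alpha (mu a) = mu (fun j => alpha (a j)).

(* Entries a_0, ..., a_{2m-2} (0-based) are read off a : nat -> V.
   comp_at k a = (alpha a_0, ..., alpha a_{k-1}, (a_k ... a_{k+m-1}),
                  alpha a_{k+m}, ..., alpha a_{2m-2}),
   i.e. the inner product sits in (0-based) position k. All twisting maps
   equal alpha. *)
Definition comp_at (m : nat) (mu : ('I_m -> V) -> V) (alpha : V -> V)
    (a : nat -> V) (k : nat) : V :=
  mu (fun j : 'I_m =>
        if (j < k)%N then alpha (a j)
        else if (j == k :> nat) then mu (fun l : 'I_m => a (k + l)%N)
        else alpha (a (j + m - 1)%N)).

Definition totally_hom_assoc (m : nat) (mu : ('I_m -> V) -> V) (alpha : V -> V) : Prop :=
  forall (k : nat), (k.+1 < m)%N -> forall a : nat -> V,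
    comp_at mu alpha a k = comp_at mu alpha a k.+1.

Definition mult_tot_hom_assoc_alg (m : nat) (mu : ('I_m -> V) -> V) (alpha : V -> V) : Prop :=
  [/\ multilinear mu, linear_map alpha, multiplicative mu alpha
    & totally_hom_assoc mu alpha].

Definition ext (p : nat) (a : 'I_p -> V) : nat -> V :=
  fun l => match insub l with Some o => a o | None => 0 end.

Definition mu1 (n : nat) (mu : ('I_n -> V) -> V) (alpha : V -> V)
    (a : 'I_(2 * n - 1) -> V) : V :=
  mu (fun j : 'I_n =>
        if (j == 0 :> nat) then mu (fun l : 'I_n => ext a l)
        else alpha (ext a (j + n - 1)%N)).

End NaryHom.

(* Main.v *)
Require Import Defs.
From HB Require Import structures.
From mathcomp Require Import all_boot all_order all_algebra.
From mathcomp Require Import zify.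
From Stdlib Require Import FunctionalExtensionality.
Import GRing.Theory.
Local Open Scope ring_scope.

Set Implicit Arguments.
Unset Strict Implicit.

Ltac ifs := repeat match goal with |- context[if ?b then _ else _] =>
  let H := fresh "H" in case H: b; try (exfalso; lia) end.

Definition Nn (K : fieldType) (V : lmodType K) (n : nat) (mu : ('I_n -> V) -> V)
  (alpha : V -> V) (g : nat -> V) : V :=
  mu (fun j : 'I_n => if (j == 0 :> nat) then mu (fun l : 'I_n => g l)
                      else alpha (g (j + n - 1)%N)).

Lemma eqM (K : fieldType) (V : lmodType K) (n : nat) (mu : ('I_n -> V) -> V)
  (F G : 'I_n -> V) : (forall j, F j = G j) -> mu F = mu G.
Proof. by move=> h; congr mu; apply: functional_extensionality. Qed.

Lemma ext_lt (K : fieldType) (V : lmodType K) p (b : 'I_p -> V) l (hl : (l < p)%N) :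
  ext b l = b (Ordinal hl).
Proof. by rewrite /ext insubT; congr b; apply: val_inj. Qed.


Lemma ext_upd (K : fieldType) (V : lmodType K) p (b : 'I_p -> V) i z l :
  ext (upd b i z) l = if l == (i : nat) then z else ext b l.
Proof.
case: (ltnP l p) => hl.
  rewrite !(ext_lt _ hl) /upd; congr (if _ then _ else _).
rewrite /ext insubF; last by rewrite ltnNge hl.
have := ltn_ord i; case: eqP => // h h2; by move: hl; rewrite h leqNgt h2.
Qed.

Lemma Lmove (K : fieldType) (V : lmodType K) (n : nat) (mu : ('I_n -> V) -> V)
  (alpha : V -> V) : totally_hom_assoc mu alpha ->
  forall k, (k < n)%N -> forall f, comp_at mu alpha f k = comp_at mu alpha f 0.
Proof.
move=> hA; elim=> // k IH hk f.
by rewrite -(hA k hk f) IH // ltnW.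
Qed.

Lemma mu1E (K : fieldType) (V : lmodType K) (n : nat) (mu : ('I_n -> V) -> V)
  (alpha : V -> V) (g : nat -> V) : (0 < n)%N ->
  mu1 mu alpha (fun j : 'I_(2 * n - 1) => g j) = Nn mu alpha g.
Proof.
move=> hn; rewrite /mu1 /Nn; apply: eqM => j; have hj := ltn_ord j.
case: eqP => h.
  congr mu; apply: functional_extensionality => l; have hl := ltn_ord l.
  have hl' : (l < 2 * n - 1)%N by lia.
  by rewrite (ext_lt _ hl').
have hl' : (j + n - 1 < 2 * n - 1)%N by lia.
by rewrite (ext_lt _ hl').
Qed.

Ltac fin := try reflexivity; try (repeat (match goal with |- @eq ?T (?f ?x) (?f ?y) =>
  match T with nat => fail 1 | _ => congr (f _) end end); lia).

Lemma assocY (K : fieldType) (V : lmodType K) (n : nat) (mu : ('I_n -> V) -> V)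
  (alpha : V -> V) (hn : (1 < n)%N) (hM : Defs.multiplicative mu alpha)
  (hA : totally_hom_assoc mu alpha) (a : nat -> V) k (hk : (k < 2 * n - 1)%N) :
  comp_at (mu1 mu alpha) (fun x => alpha (alpha x)) a k =
  mu (fun j : 'I_n => if (j == 0 :> nat) then
     comp_at mu alpha (fun i => if i == 0 then mu (fun l : 'I_n => a l)
                                else alpha (a (i + n - 1)%N)) 0
     else alpha (alpha (alpha (a (j + 3 * n - 3)%N)))).
Proof.
have L := Lmove hA.
have hn0 : (0 < n)%N by lia.
rewrite /comp_at.
rewrite (_ : mu1 mu alpha (fun l : 'I_(2*n-1) => a (k + l)%N) =
             Nn mu alpha (fun l => a (k + l)%N)); last exact: mu1E.
pose E x := if (x < k)%N then alpha (alpha (a x)) else if x == k then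
   Nn mu alpha (fun l => a (k + l)%N) else alpha (alpha (a (x + (2*n-1) - 1)%N)).
transitivity (Nn mu alpha E); first exact: (mu1E mu alpha E hn0).
rewrite /Nn.
case: (ltnP k n) => hkn.
- apply: eqM => j; have hj := ltn_ord j.
  case: eqP => hj0; last first.
    rewrite /E; cbv beta; ifs; fin.
  pose g i := if (i < k)%N then alpha (a i) else if i == k then
     mu (fun l : 'I_n => a (k + l)%N) else alpha (a (i + n - 1)%N).
  transitivity (comp_at mu alpha g k).
    rewrite /comp_at; apply: eqM => l; have hl := ltn_ord l.
    rewrite /E /g; cbv beta; ifs; fin.
    rewrite /Nn; apply: eqM => l'; have hl' := ltn_ord l'; ifs; fin.
  rewrite (L _ hkn) /comp_at; apply: eqM => j'; have hj' := ltn_ord j'.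
  rewrite /g; cbv beta; ifs; fin.
  transitivity (comp_at mu alpha a k).
    rewrite /comp_at; apply: eqM => l; have hl := ltn_ord l; ifs; fin.
  rewrite (L _ hkn) /comp_at; apply: eqM => l; have hl := ltn_ord l; ifs; fin.
- have hk'n : (k - n + 1 < n)%N by lia.
  pose G (i : nat) := if (i == 0)%N then mu (fun l : 'I_n => alpha (a l)) else
     if (i < k - n + 1)%N then alpha (alpha (a (i + n - 1)%N)) else
     if (i == k - n + 1)%N then mu (fun l : 'I_n => alpha (a (k + l)%N)) else
     alpha (alpha (a (i + 2 * n - 2)%N)).
  transitivity (comp_at mu alpha G (k - n + 1)).
  { rewrite /comp_at; apply: eqM => j; have hj := ltn_ord j.
    rewrite /E /G; cbv beta; ifs; fin.
    all: rewrite /Nn ?hM; apply: eqM => l; have hl := ltn_ord l; ifs; fin.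
    all: rewrite ?hM; fin. }
  rewrite (L _ hk'n) /comp_at; apply: eqM => j; have hj := ltn_ord j.
  rewrite /G; cbv beta; ifs; fin.
  transitivity (comp_at mu alpha (fun i => if i == 0 then mu (fun l : 'I_n => a l)
                                else alpha (a (i + n - 1)%N)) (k - n + 1)).
  { rewrite /comp_at; apply: eqM => l; have hl := ltn_ord l; ifs; fin.
    all: rewrite ?hM; apply: eqM => l'; have hl' := ltn_ord l'; ifs; fin. }
  by rewrite (L _ hk'n).
Qed.

Lemma mu1_multilinear (K : fieldType) (V : lmodType K) (n : nat) (mu : ('I_n -> V) -> V)
  (alpha : V -> V) (hn : (1 < n)%N) (hML : multilinear mu) (hL : linear_map alpha) :
  multilinear (mu1 mu alpha).
Proof.
have hn0 : (0 < n)%N by lia.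
move=> i b c x y.
case: (ltnP i n) => hi.
  pose i' : 'I_n := Ordinal hi.
  pose o : 'I_n := Ordinal hn0.
  pose B (j : 'I_n) := if (j == 0 :> nat) then 0 else alpha (ext b (j + n - 1)%N).
  pose f v := mu (upd (fun l : 'I_n => ext b l) i' v).
  have E v : mu1 mu alpha (upd b i v) = mu (upd B o (f v)).
    rewrite /mu1; congr mu; apply: functional_extensionality => j.
    have hj := ltn_ord j.
    rewrite {3}/upd /B /f; case: eqP => hj0.
      rewrite (_ : (j == o) = true); last by apply/eqP/val_inj.
      congr mu; apply: functional_extensionality => l.
      by rewrite ext_upd /upd.
    rewrite (_ : (j == o) = false); last by apply/eqP => h; apply: hj0; rewrite h.
    rewrite ext_upd ifN //; apply/eqP; lia.
  by rewrite !E /f hML hML.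
have hi2 := ltn_ord i.
have hp : (i - n + 1 < n)%N by lia.
pose p : 'I_n := Ordinal hp.
pose B (j : 'I_n) := if (j == 0 :> nat) then mu (fun l : 'I_n => ext b l)
                     else alpha (ext b (j + n - 1)%N).
have E v : mu1 mu alpha (upd b i v) = mu (upd B p (alpha v)).
  rewrite /mu1; congr mu; apply: functional_extensionality => j.
  have hj := ltn_ord j.
  rewrite {3}/upd /B; case: eqP => hj0.
    rewrite (_ : (j == p) = false); last by apply/eqP => h; move: hj0; rewrite h /=; lia.
    congr mu; apply: functional_extensionality => l.
    have hl := ltn_ord l.
    rewrite ext_upd ifN //; apply/eqP; lia.
  rewrite ext_upd (_ : ((j + n - 1)%N == (i : nat)) = (j == p)).
    by case: (j == p).
  rewrite -val_eqE /=; apply/eqP/eqP; lia.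
by rewrite !E hL hML.
Qed.

Unset Implicit Arguments.

Theorem theorem3p1 (K : fieldType) (V : lmodType K) (n : nat)
    (mu : ('I_n -> V) -> V) (alpha : V -> V) :
  [pchar K] =i pred0 ->
  (2 <= n)%N ->
  mult_tot_hom_assoc_alg mu alpha ->
  mult_tot_hom_assoc_alg (mu1 mu alpha) (fun x => alpha (alpha x)).
Proof.
move=> _ hn [hML hL hM hA].
have a0 : alpha 0 = 0.
  by have := hL (-1) 0 0; rewrite scaler0 add0r scaleN1r addNr.
split.
- exact: mu1_multilinear.
- by move=> c x y; rewrite !hL.
- move=> b /=; rewrite /mu1 !hM; congr mu; apply: functional_extensionality => j.
  case: eqP => _.
    rewrite !hM; congr mu; apply: functional_extensionality => l.
    by rewrite /ext; case: (insub (nat_of_ord l)) => [o|] //; rewrite !a0.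
  by rewrite /ext; case: (insub _) => [o|] //; rewrite !a0.
- move=> k hk a.
  rewrite (assocY hn hM hA) ?(assocY hn hM hA) //; lia.
Qed.
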